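(* Let $c_0,p_0$ be constants and let $(H_n)_{n\in\mathbb Z}$, $(G_n)_{n\in\mathbb Z}$ be sequences of differentiable functions of a real variable $\eta$ on a common interval, with $H_n>0$, satisfying for all $n$ \[ -c_0\,H_n+\frac{dH_n}{d\eta}=H_n\bigl(G_{n+1}-G_n\bigr),\qquad p_0-c_0\,G_n+\frac{dG_n}{d\eta}=2\bigl(H_n^2-H_{n-1}^2\bigr). \] Define $r_n(\eta)=2\log\bigl(2H_n(\eta)\bigr)$. Then for all $n$ \[ \frac{d^2 r_n}{d\eta^2}=c_0\Bigl(\frac{dr_n}{d\eta}-2c_0\Bigr)+\bigl(e^{r_{n+1}}-2e^{r_n}+e^{r_{n-1}}\bigr). \]
   Context: In the paper this is stated in the notation $H=H(\eta)$, $\overline H=H(\overline\eta)$, $\underline H=H(\underline\eta)$ along a chain of points $\eta=\nu(n)+\sigma(t)$, $\overline\eta=\nu(n+1)+\sigma(t)$; here $H_n$, $G_n$ denote $H$, $G$ evaluated at the $n$-th point of the chain, viewed as functions of the common shift parameter, and overline/underline correspond to $n\pm1$. *)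

(* Defs.v *)
From Stdlib Require Import Reals ZArith.
From Coquelicot Require Import Coquelicot.
Open Scope R_scope.

Definition in_interval (a b : Rbar) (x : R) : Prop :=
  Rbar_lt a (Finite x) /\ Rbar_lt (Finite x) b.

Definition r_of (H : Z -> R -> R) (n : Z) (x : R) : R :=
  2 * ln (2 * H n x).

(* Main.v *)
Require Import Defs.
From Stdlib Require Import Reals ZArith Lra Lia.
From Coquelicot Require Import Coquelicot.
Open Scope R_scope.

Lemma exp_r (H : Z -> R -> R) n x : 0 < H n x -> exp (r_of H n x) = 4 * (H n x)^2.
Proof.
  intros Hp. unfold r_of.
  replace (2 * ln (2 * H n x)) with (ln (2 * H n x) + ln (2 * H n x)) by ring.
  rewrite exp_plus, exp_ln by lra. ring.
Qed.

Theorem mainTheorem2 (c0 p0 : R) (a b : Rbar) (H G : Z -> R -> R) :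
  Rbar_lt a b ->
  (forall n x, in_interval a b x -> ex_derive (H n) x) ->
  (forall n x, in_interval a b x -> ex_derive (G n) x) ->
  (forall n x, in_interval a b x -> 0 < H n x) ->
  (forall n x, in_interval a b x ->
     - c0 * H n x + Derive (H n) x = H n x * (G (n + 1)%Z x - G n x)) ->
  (forall n x, in_interval a b x ->
     p0 - c0 * G n x + Derive (G n) x = 2 * (H n x ^ 2 - H (n - 1)%Z x ^ 2)) ->
  forall n x, in_interval a b x ->
    is_derive (fun y => Derive (r_of H n) y) x
      (c0 * (Derive (r_of H n) x - 2 * c0)
       + (exp (r_of H (n + 1)%Z x) - 2 * exp (r_of H n x) + exp (r_of H (n - 1)%Z x))).
Proof.
  intros Hab dH dG Hpos EH EG n x Hx.
  assert (Dr : forall y, in_interval a b y ->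
    Derive (r_of H n) y = 2 * (c0 + G (n+1)%Z y - G n y)).
  { intros y Hy. apply is_derive_unique. unfold r_of.
    specialize (Hpos n y Hy). specialize (EH n y Hy).
    auto_derive.
    - split; [apply dH; exact Hy | split; [lra | exact I]].
    - change (Derive (fun x => H n x) y) with (Derive (H n) y).
      replace (Derive (H n) y) with (H n y * (G (n + 1)%Z y - G n y) + c0 * H n y) by lra.
      field. lra. }
  assert (Loc : locally x (fun y => in_interval a b y)).
  { assert (Op : open (fun y => in_interval a b y)).
    { unfold in_interval. apply open_and; [apply open_Rbar_gt | apply open_Rbar_lt]. }
    apply Op. exact Hx. }
  apply is_derive_ext_loc with (f := fun y => 2 * (c0 + G (n+1)%Z y - G n y)).
  { eapply filter_imp; [|exact Loc]. intros y Hy. simpl. symmetry. apply Dr. exact Hy. }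
  rewrite (Dr x Hx).
  rewrite !exp_r by (apply Hpos; exact Hx).
  pose proof (EG (n+1)%Z x Hx) as E1. pose proof (EG n x Hx) as E2.
  replace (n + 1 - 1)%Z with n in E1 by lia.
  auto_derive.
  - split; [apply dG; exact Hx | split; [apply dG; exact Hx | exact I]].
  - change (Derive (fun y => G (n+1)%Z y) x) with (Derive (G (n+1)%Z) x).
    change (Derive (fun y => G n y) x) with (Derive (G n) x).
    lra.
Qed.
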